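(* Consider the secure distributed linearly separable computation problem with $\mathsf K_{\rm c}=1$ and $\mathsf M=\frac{\mathsf K}{\mathsf N}(\mathsf N-\mathsf N_{\rm r}+1)$. Then $$\eta^\star\ge\left\lceil\frac{\mathsf N}{\mathsf N-\mathsf N_{\rm r}+1}\right\rceil-1.$$
   Context: Problem setting. $\mathsf K,\mathsf N,\mathsf N_{\rm r},\mathsf M$ are positive integers with $\mathsf N_{\rm r}\le \mathsf N$ and $\mathsf N$ dividing $\mathsf K$. Fix a prime power $\mathsf q$ (sufficiently large) and a positive integer $\mathsf L$. Datasets $D_1,\dots,D_{\mathsf K}$ are independent; message $W_k=f_k(D_k)\in\mathbb F_{\mathsf q}^{\mathsf L}$, with $W_1,\dots,W_{\mathsf K}$ mutually independent and uniform over $\mathbb F_{\mathsf q}^{\mathsf L}$. The user wants $W_1+\cdots+W_{\mathsf K}$. A secure scheme consists of an assignment $\mathcal Z_n\subseteq[\mathsf K]$, $|\mathcal Z_n|\le\mathsf M$; a random variable $Q$ on a finite set independent of the datasets, given to all servers but not the user; transmissions $X_n=\psi_n(\{W_k:k\in\mathcal Z_n\},Q)\in\mathbb F_{\mathsf q}^{\mathsf T_n}$; decodability from $\{X_n:n\in\mathcal A\}$ for every $\mathcal A\subseteq[\mathsf N]$, $|\mathcal A|=\mathsf N_{\rm r}$; security $I(W_1,\dots,W_{\mathsf K};X_1,\dots,X_{\mathsf N}\mid W_1+\cdots+W_{\mathsf K})=0$. Communication cost $\mathsf R=\max_{|\mathcal A|=\mathsf N_{\rm r}}\sum_{n\in\mathcal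 A}\mathsf T_n/\mathsf L$; randomness size $\eta=H(Q)/\mathsf L$ ($\mathsf q$-ary units). $\mathsf R^\star$ is the minimum communication cost over secure schemes, and $\eta^\star$ is the minimum randomness size over secure schemes with $\mathsf R=\mathsf R^\star$. *)

(* Defs.v *)
From HB Require Import structures.
From mathcomp Require Import all_boot all_order all_algebra.
From mathcomp Require Import Rstruct.
From Stdlib Require Import Reals.

Set Implicit Arguments.
Unset Strict Implicit.
Unset Printing Implicit Defensive.

Import Order.TTheory GRing.Theory Num.Theory.
Local Open Scope ring_scope.

Definition prob_eq (Om : finType) (mu : Om -> R) (V : eqType) (f : Om -> V) (w : Om) : R :=
  \sum_(w' : Om | f w' == f w) mu w'.

(* Entropy of f : Om -> V under the distribution mu, in base-q units:
   H(f) = - sum_w mu(w) log_q P[f = f w]  ( = - sum_v P[f=v] log_q P[f=v] ). *)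
Definition entropy_q (q : nat) (Om : finType) (mu : Om -> R) (V : eqType) (f : Om -> V) : R :=
  - (\sum_(w : Om) mu w * (ln (prob_eq mu f w) / ln (q%:R))).

Definition cond_mutinf_q (q : nat) (Om : finType) (mu : Om -> R)
    (VA VB VC : eqType) (A : Om -> VA) (B : Om -> VB) (C : Om -> VC) : R :=
  entropy_q q mu (fun w => (A w, C w)) + entropy_q q mu (fun w => (B w, C w))
  - entropy_q q mu (fun w => (A w, B w, C w)) - entropy_q q mu C.

(* A (candidate) scheme for K datasets, N servers, over the field F, message length L.  Common randomness Q takes values in the
   finite set QT with distribution pQ.  Server n is assigned Z n and sends
   X_n = psi n w Q in F^(T n). *)
Record scheme (K N : nat) (F : finFieldType) (L : nat) := Scheme {
  Zs : 'I_N -> {set 'I_K};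
  QT : finType;
  pQ : QT -> R;
  Tn : 'I_N -> nat;
  psi : forall n : 'I_N, {ffun 'I_K -> 'rV[F]_L} -> QT -> 'rV[F]_(Tn n)
}.
Arguments Zs {K N F L} s _.
Arguments QT {K N F L} s.
Arguments pQ {K N F L} s _.
Arguments Tn {K N F L} s _.
Arguments psi {K N F L} s n _ _.

Section Model.
Variables (K N Nr M : nat) (F : finFieldType) (L : nat).

Definition msgs := {ffun 'I_K -> 'rV[F]_L}.

Definition omega (S : scheme K N F L) := (msgs * QT S)%type.

(* joint law: W uniform on (F^L)^K, independent of Q ~ pQ *)
Definition mu (S : scheme K N F L) (o : omega S) : R :=
  pQ S o.2 / (#|{: msgs}|%:R).

Definition sumW (w : msgs) : 'rV[F]_L := \sum_(k < K) w k.

Definition rowseq m (x : 'rV[F]_m) : seq F := [seq x 0 j | j <- enum 'I_m].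

Definition Xall (S : scheme K N F L) (o : omega S) : {ffun 'I_N -> seq F} :=
  [ffun n => rowseq (psi S n o.1 o.2)].

Definition valid_scheme (S : scheme K N F L) : Prop :=
  (forall n, leq #|Zs S n| M) /\
  (forall x, 0 <= pQ S x) /\ (\sum_(x : QT S) pQ S x = 1) /\
  (forall n (w w' : msgs) x,
      (forall k, k \in Zs S n -> w k = w' k) -> psi S n w x = psi S n w' x) /\
  (* decodability: W_1+...+W_K is (almost surely) a function of {X_n : n in A}
     for every A with |A| = Nr *)
  (forall A : {set 'I_N}, #|A| = Nr ->
     forall o o' : omega S, 0 < mu o -> 0 < mu o' ->
       (forall n, n \in A -> psi S n o.1 o.2 = psi S n o'.1 o'.2) ->
       sumW o.1 = sumW o'.1) /\
  cond_mutinf_q #|F| (@mu S) (fun o : omega S => o.1) (@Xall S)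
                (fun o : omega S => sumW o.1) = 0.

Definition comm_cost (S : scheme K N F L) : R :=
  (\max_(A : {set 'I_N} | #|A| == Nr) \sum_(n in A) Tn S n)%N%:R / L%:R.

Definition rand_size (S : scheme K N F L) : R :=
  entropy_q #|F| (@mu S) (fun o : omega S => o.2) / L%:R.

End Model.

Definition ceildiv (a b : nat) : nat := divn (a + b).-1 b.

(* Main.v *)
Require Import Defs.
From HB Require Import structures.
From mathcomp Require Import all_boot all_order all_algebra.
From mathcomp Require Import Rstruct.
From Stdlib Require Import Reals.
From mathcomp Require Import zify ring lra.
Import Order.TTheory GRing.Theory Num.Theory.
Local Open Scope ring_scope.

Set Implicit Arguments.
Unset Strict Implicit.
Unset Printing Implicit Defensive.

Lemma ln_le' (x y : R) : 0 < x -> x <= y -> ln x <= ln y.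
Proof.
move=> x0 xy; have [->|lt] := eqVneq x y; first by [].
apply/RleP; left; apply: ln_increasing; first exact/RltP.
by apply/RltP; rewrite lt_neqAle lt xy.
Qed.

Lemma ln_gt0' (x : R) : 1 < x -> 0 < ln x.
Proof.
move=> x1; have h := ln_increasing 1 x; rewrite ln_1 in h.
by apply/RltP; apply: h; apply/RltP => //; rewrite R1E.
Qed.

Section Main.
Variables (K N Nr M : nat) (F : finFieldType) (L : nat) (S : scheme K N F L).

Local Notation Msz := (#|{: msgs K F L}|).
Local Notation mu := (@mu K N F L S).

Lemma Msz_gt0 : leq 1 Msz.
Proof. by apply/card_gt0P; exists 0. Qed.

Lemma probE (P : pred (omega S)) :
  \sum_(o | P o) mu o = \sum_(x : QT S) (pQ S x / Msz%:R) *+ #|[set w | P (w, x)]|.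
Proof.
rewrite big_mkcond /=.
have -> : \sum_(o : omega S) (if P o then mu o else 0) =
   \sum_(w : msgs K F L) \sum_(x : QT S) (if P (w, x) then mu (w, x) else 0).
  by rewrite pair_big; apply: eq_bigr => -[w x].
rewrite exchange_big; apply: eq_bigr => x _ /=.
rewrite -big_mkcond /= -sumr_const; apply: eq_big => // w; by rewrite inE.
Qed.

Hypothesis HK : (0 < K)%nat.
Hypothesis HL : (0 < L)%nat.
Hypothesis HNr : (0 < Nr)%nat.
Hypothesis HNrN : (Nr <= N)%nat.
Hypothesis Hv : valid_scheme Nr M S.

Lemma pQ_ge0 x : 0 <= pQ S x. Proof. by case: Hv => _ [H _]. Qed.
Lemma pQ_sum1 : \sum_(x : QT S) pQ S x = 1. Proof. by case: Hv => _ [_ [H _]]. Qed.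
Lemma psi_loc n (w w' : msgs K F L) x :
  (forall k, k \in Zs S n -> w k = w' k) -> psi S n w x = psi S n w' x.
Proof. by case: Hv => _ [_ [_ [H _]]]; apply: H. Qed.
Lemma Zs_le n : (#|Zs S n| <= M)%nat. Proof. by case: Hv => H _. Qed.

Lemma mu_ge0 o : 0 <= mu o.
Proof. by rewrite /Defs.mu divr_ge0 ?pQ_ge0 ?ler0n. Qed.

Lemma mu_posE o : (0 < mu o) = (0 < pQ S o.2).
Proof. by rewrite /Defs.mu pmulr_lgt0 // invr_gt0 ltr0n Msz_gt0. Qed.

Lemma dec (A : {set 'I_N}) x (w w' : msgs K F L) : #|A| = Nr -> 0 < pQ S x ->
  (forall n, n \in A -> psi S n w x = psi S n w' x) -> sumW w = sumW w'.
Proof.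
case: Hv => _ [_ [_ [_ [H _]]]] hA hx hpsi.
by apply: (H A hA (w, x) (w', x)) => //; rewrite mu_posE.
Qed.

Lemma exists_x : exists x, 0 < pQ S x.
Proof.
case: (boolP [exists x, 0 < pQ S x]) => [/existsP // | /existsPn H].
have : \sum_(x : QT S) pQ S x = 0.
  by apply: big1 => x _; apply/eqP; rewrite eq_le pQ_ge0 andbT leNgt H.
by rewrite pQ_sum1 => /eqP; rewrite oner_eq0.
Qed.

Lemma sumW_diff (w w' : msgs K F L) k : (forall k', k' != k -> w k' = w' k') ->
  sumW w - sumW w' = w k - w' k.
Proof.
move=> H; rewrite /sumW (bigD1 k) //= [X in _ - X](bigD1 k) //=.
rewrite (eq_bigr (fun i => w' i)) => [|i /H //].
by rewrite opprD addrACA subrr addr0.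
Qed.

Lemma subset_size (T : finType) (B : {set T}) j : (j <= #|B|)%nat ->
  exists A : {set T}, A \subset B /\ #|A| = j.
Proof.
move=> hj; have : (0 < #|[set A : {set T} | A \subset B & #|A| == j]|)%nat.
  by rewrite cards_draws bin_gt0.
by case/card_gt0P => A; rewrite inE => /andP[? /eqP]; exists A.
Qed.

Definition holders k := [set n | k \in Zs S n].

Lemma holders_ge k : (N - Nr + 1 <= #|holders k|)%nat.
Proof.
rewrite leqNgt; apply/negP => hlt.
have hB : (Nr <= #|~: holders k|)%nat.
  by move: (cardsC (holders k)); rewrite card_ord; lia.
have [A [sAB hA]] := subset_size hB.
have [x hx] := exists_x.
pose w : msgs K F L := [ffun=> 0].
pose w' : msgs K F L := [ffun k' => if k' == k then const_mx 1 else 0].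
have hs := dec hA hx (w := w) (w' := w') _.
have {hs} : sumW w' - sumW w = 0.
  rewrite hs; first by rewrite subrr.
  move=> n nA; apply: psi_loc => k' hk'; rewrite !ffunE.
  case: eqP => // ek; move: (subsetP sAB n nA); rewrite !inE -ek hk' //.
rewrite (sumW_diff (k := k)); last by move=> k' /negbTE nk; rewrite !ffunE nk.
rewrite !ffunE eqxx subr0 => /matrixP /(_ 0 (Ordinal HL)); rewrite !mxE => /eqP.
by rewrite oner_eq0.
Qed.


Hypothesis HNK : (N %| K)%nat.
Hypothesis HMdef : M = (K %/ N * (N - Nr + 1))%nat.

Lemma holders_le k : (#|holders k| <= N - Nr + 1)%nat.
Proof.
set m := (N - Nr + 1)%nat.
have e : (\sum_(k < K) #|holders k| = \sum_(n < N) #|Zs S n|)%nat.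
  transitivity (\sum_(k < K) \sum_(n < N) ((k \in Zs S n) : nat))%nat.
    apply: eq_bigr => k' _; rewrite -sum1_card big_mkcond /=; apply: eq_bigr => n _.
    by rewrite inE; case: (k' \in Zs S n).
  rewrite exchange_big /=; apply: eq_bigr => n _; rewrite -sum1_card [RHS]big_mkcond /=.
  by apply: eq_bigr => k' _; case: (k' \in Zs S n).
have le1 : (\sum_(n < N) #|Zs S n| <= N * M)%nat.
  rewrite -[X in (_ <= X * _)%nat]card_ord -sum_nat_const.
  by apply: leq_sum => n _; apply: Zs_le.
have eNM : (N * M = K * m)%nat by rewrite HMdef mulnA [(N * _)%nat]mulnC divnK.
rewrite (bigD1 k) //= in e.
have le2 : ((K - 1) * m <= \sum_(k' < K | k' != k) #|holders k'|)%nat.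
  have -> : ((K - 1) * m = \sum_(k' < K | k' != k) m)%nat.
    by rewrite sum_nat_const cardC1 card_ord subn1.
  by apply: leq_sum => k' _; apply: holders_ge.
have e3 : ((K - 1) * m + m = K * m)%nat.
  by rewrite -{2}(mul1n m) -mulnDl subnK.
move: e le1 eNM le2 e3; set s1 := (\sum_(_ < _ | _) _)%nat; set s2 := (\sum_(_ < _) _)%nat.
move: ((K - 1) * m)%nat (K * m)%nat (N * M)%nat => a b c; move=> h1 h2 h3 h4 h5; rewrite -(leq_add2r s1) h1; apply: (leq_trans h2); by rewrite h3 -h5 addnC leq_add2l.
Qed.

Lemma inj1 k n x (w w' : msgs K F L) : k \in Zs S n -> 0 < pQ S x ->
  (forall k', k' != k -> w k' = w' k') -> psi S n w x = psi S n w' x -> w = w'.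
Proof.
move=> hk hx hag hpsi.
have hB : (Nr - 1 <= #|~: holders k|)%nat.
  by move: (cardsC (holders k)) (holders_le k); rewrite card_ord; lia.
have [A0 [sAB hA0]] := subset_size hB.
have nA0 : n \notin A0.
  by apply/negP => /(subsetP sAB); rewrite !inE hk.
have hA : #|n |: A0| = Nr by rewrite cardsU1 nA0 hA0; lia.
have hs := dec hA hx (w := w) (w' := w') _.
have {hs} : sumW w - sumW w' = 0.
  rewrite hs ?subrr // => n'; rewrite !inE => /orP[/eqP -> // | nA].
  apply: psi_loc => k' hk'; apply: hag; apply/negP => /eqP ek.
  by move: (subsetP sAB n' nA); rewrite !inE -ek hk'.
rewrite (sumW_diff hag) => /eqP; rewrite subr_eq0 => /eqP e.
by apply/ffunP => k'; case: (eqVneq k' k) => [-> // | /hag].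
Qed.


Definition decodes (T : {set 'I_K}) (V : {set 'I_N}) :=
  forall x, 0 < pQ S x -> forall w w' : msgs K F L,
  (forall k, k \notin T -> w k = w' k) ->
  (forall n, n \in V -> psi S n w x = psi S n w' x) -> w = w'.

Lemma build j : (forall i, (i < j)%nat -> (i * M < K)%nat) ->
  exists (T : {set 'I_K}) (V : {set 'I_N}) (U : {set 'I_K}), #|T| = j /\ T \subset U /\ (#|U| <= j * M)%nat /\
    (forall n, n \in V -> Zs S n \subset U) /\ decodes T V.
Proof.
elim: j => [|j IH] hj.
  exists set0, set0, set0; rewrite cards0 sub0set; split=> //; split=> //; split=> //.
  split=> [n|]; first by rewrite inE.
  move=> x _ w w' hag _; apply/ffunP => k; apply: hag; by rewrite inE.
have [T [V [U [hT [sTU [hU [hVU hdec]]]]]]] := IH (fun i hi => hj i (leqW hi)).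
have jM : (j * M < K)%nat := hj j (ltnSn j).
have [k kU] : exists k, k \in ~: U.
  apply/card_gt0P; move: (cardsC U); rewrite card_ord => e.
  by rewrite -(ltn_add2l #|U|) e addn0 (leq_ltn_trans hU jM).
have [n hn] : exists n, n \in holders k.
  by apply/card_gt0P; apply: leq_trans (holders_ge k); rewrite addn1.
rewrite inE in kU; rewrite inE in hn.
have kT : k \notin T by apply: contra kU; apply: (subsetP sTU).
exists (k |: T), (n |: V), (U :|: Zs S n).
split; first by rewrite cardsU1 kT hT.
split.
  apply/subsetP => y; rewrite !inE => /orP[/eqP -> | yT]; first by rewrite hn orbT.
  by rewrite (subsetP sTU y yT).
split.
  rewrite cardsU mulSn addnC; apply: leq_trans (leq_subr _ _) _.
  by apply: leq_add => //; apply: Zs_le.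
split.
  move=> n'; rewrite !inE => /orP[/eqP -> | /hVU h]; first exact: subsetUr.
  by apply: subset_trans h (subsetUl _ _).
move=> x hx w w' hag hpsi.
pose u : msgs K F L := [ffun k' => if k' == k then w' k else w k'].
have uw' : u = w'.
  apply: (hdec x hx) => [k' k'T | n' n'V].
    rewrite ffunE; case: eqP => [-> // | /eqP nk]; apply: hag.
    by rewrite !inE negb_or nk.
  rewrite -(hpsi n'); last by rewrite !inE n'V orbT.
  apply: psi_loc => k' hk'; rewrite ffunE; case: eqP => // ek.
  by move: kU; rewrite -ek (subsetP (hVU n' n'V) k' hk').
apply: (inj1 hn hx) => [k' nk | ]; last by apply: hpsi; rewrite !inE eqxx.
by rewrite -uw' ffunE (negbTE nk).
Qed.


Lemma count_fib (T : {set 'I_K}) V x (A : {set msgs K F L}) :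
  decodes T V -> 0 < pQ S x ->
  (forall w w', w \in A -> w' \in A -> forall n, n \in V -> psi S n w x = psi S n w' x) ->
  (#|A| * (expn #|{: 'rV[F]_L}| #|T|) <= Msz)%nat.
Proof.
move=> hdec hx hA.
pose G := {ffun {k : 'I_K | k \in T} -> 'rV[F]_L}.
have cG : #|{: G}| = (expn #|{: 'rV[F]_L}| #|T|)%nat.
  by rewrite card_ffun card_sig; congr expn; exact: eq_card.
pose f (p : (msgs K F L * G)%type) : msgs K F L :=
  [ffun k => match (insub k : option {k0 : 'I_K | k0 \in T}) with
             | Some s => p.2 s | None => p.1 k end].
have := @leq_card_in _ _ f (setX A [set: G]).
rewrite cardsX cardsT cG; apply.
move=> [w1 g1] [w2 g2]; rewrite !inE /= => /andP[h1 _] /andP[h2 _] /ffunP e.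
have ew : w1 = w2.
  apply: (hdec x hx) => [k kT | n nV]; last exact: hA.
  by have := e k; rewrite /f /= !ffunE insubN.
rewrite ew; congr pair; apply/ffunP => s.
by have := e (val s); rewrite /f /= !ffunE valK.
Qed.


Lemma count_C c :
  (Msz <= #|{: 'rV[F]_L}| * #|[set w : msgs K F L | sumW w == c]|)%nat.
Proof.
pose k0 : 'I_K := Ordinal HK.
pose f (w : msgs K F L) : ('rV[F]_L * msgs K F L)%type :=
  (sumW w, [ffun k => w k - (if k == k0 then sumW w - c else 0)]).
have inj : injective f.
  move=> w1 w2 [es /ffunP e]; apply/ffunP => k; have := e k.
  by rewrite !ffunE es => /addIr.
rewrite -cardsT -(card_imset [set: msgs K F L] inj) -[#|{: 'rV_L}|]cardsT -cardsX.
apply: subset_leq_card; apply/subsetP => y /imsetP [w _ ->]; rewrite !inE /=.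
rewrite /sumW; under eq_bigr do rewrite ffunE.
rewrite sumrB -big_mkcond big_pred1_eq -/(sumW w).
by rewrite opprB addrC subrK.
Qed.


Lemma Msz_neq0 : (Msz%:R : R) != 0.
Proof. by rewrite pnatr_eq0 -lt0n Msz_gt0. Qed.

Lemma rowseq_inj m (a b : 'rV[F]_m) : rowseq a = rowseq b -> a = b.
Proof.
move=> /eq_in_map e; apply/rowP => j; apply: e.
by rewrite mem_enum.
Qed.

Lemma sum_mu1 : \sum_(o : omega S) mu o = 1.
Proof.
have := probE xpredT; rewrite /= => ->.
rewrite -[RHS]pQ_sum1; apply: eq_bigr => x _.
rewrite -mulr_natr (_ : #|_| = Msz); first by rewrite divfK // Msz_neq0.
by rewrite -cardsT; apply: eq_card => w; rewrite !inE.
Qed.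

Lemma PQ o : prob_eq mu (fun o => o.2) o = pQ S o.2.
Proof.
rewrite /prob_eq probE (bigD1 o.2) //= big1 => [|x nx].
  rewrite addr0 -mulr_natr (_ : #|_| = Msz); first by rewrite divfK // Msz_neq0.
  by rewrite -cardsT; apply: eq_card => w; rewrite !inE eqxx.
rewrite (_ : #|[set w : msgs K F L | x == o.2]| = 0%nat) ?mulr0n //; apply: eq_card0 => w.
by rewrite !inE (negbTE nx).
Qed.

Lemma PWC o : prob_eq mu (fun o => (o.1, sumW o.1)) o = Msz%:R^-1.
Proof.
rewrite /prob_eq probE /=.
have e : #|[set w : msgs K F L | (w, sumW w) == (o.1, sumW o.1)]| = 1%nat.
  rewrite (_ : [set w | _] = [set o.1]) ?cards1 //.
  by apply/setP => w; rewrite !inE xpair_eqE; case: eqP => // ->; rewrite eqxx.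
under eq_bigr do rewrite e mulr1n.
by rewrite -mulr_suml pQ_sum1 mul1r.
Qed.

Lemma PWXC o : mu o <= prob_eq mu (fun o => (o.1, Xall o, sumW o.1)) o.
Proof.
rewrite /prob_eq (bigD1 o) //= lerDl; apply: sumr_ge0 => o' _; exact: mu_ge0.
Qed.

Lemma PXC T V o : decodes T V ->
  prob_eq mu (fun o => (Xall o, sumW o.1)) o <= ((expn #|{: 'rV[F]_L}| #|T|)%:R)^-1.
Proof.
move=> hdec; rewrite /prob_eq probE /=.
set c := (X in _ <= X).
have -> : c = (\sum_x pQ S x) * c by rewrite pQ_sum1 mul1r.
rewrite mulr_suml; apply: ler_sum => x _.
have [px0|px] := eqVneq (pQ S x) 0; first by rewrite px0 !mul0r mul0rn.
have hx : 0 < pQ S x by rewrite lt0r px pQ_ge0.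
rewrite -mulr_natr -mulrA ler_wpM2l ?pQ_ge0 // mulrC ler_pdivrMr ?ltr0n ?Msz_gt0 //.
rewrite ler_pdivlMl ?ltr0n ?expn_gt0 ?card_gt0 //; last first.
  by apply/orP; left; apply/card_gt0P; exists 0.
rewrite -natrM ler_nat mulnC; apply: count_fib hdec hx _ => w w'.
rewrite !inE !xpair_eqE => /andP[/eqP e1 _] /andP[/eqP e2 _] n _.
move/ffunP/(_ n): e1; move/ffunP/(_ n): e2; rewrite !ffunE /= => e2 e1.
by apply: rowseq_inj; rewrite e1 e2.
Qed.

Lemma PC o : ((#|{: 'rV[F]_L}|)%:R)^-1 <= prob_eq mu (fun o => sumW o.1) o.
Proof.
rewrite /prob_eq probE /=.
under eq_bigr => x _ do rewrite -mulr_natr -mulrA.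
rewrite -mulr_suml pQ_sum1 mul1r.
rewrite ler_pdivlMl ?ltr0n ?Msz_gt0 // ler_pdivrMr ?ltr0n; last first.
  by apply/card_gt0P; exists 0.
by rewrite -natrM ler_nat mulnC; apply: count_C.
Qed.


Local Notation lq := (ln (#|F|%:R)).

Lemma q_gt0 : (0 : R) < #|F|%:R.
Proof. by rewrite ltr0n; apply/card_gt0P; exists 0. Qed.

Lemma lq_gt0 : 0 < lq.
Proof. by apply: ln_gt0'; rewrite ltr1n card_finNzRing_gt1. Qed.

Lemma ln_qn n : ln ((#|F|%:R ^+ n)^-1) = - (n%:R * lq).
Proof.
have qn : (0 : R) < #|F|%:R ^+ n by apply: exprn_gt0; exact: q_gt0.
rewrite -RinvE ln_Rinv; last exact/RltP.
by rewrite -RpowE ln_pow ?INRE //; apply/RltP; exact: q_gt0.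
Qed.

Lemma pw_ge P n : 0 < P -> P <= (#|F|%:R ^+ n)^-1 -> n%:R <= - ln P / lq.
Proof.
move=> P0 hP; have := ln_le' P0 hP; rewrite ln_qn => h.
rewrite ler_pdivlMr ?lq_gt0 //; lra.
Qed.

Lemma pw_le P n : 0 < P -> (#|F|%:R ^+ n)^-1 <= P -> - ln P / lq <= n%:R.
Proof.
move=> P0 hP.
have hq : 0 < (#|F|%:R ^+ n)^-1 :> R by rewrite invr_gt0 exprn_gt0 // q_gt0.
have := ln_le' hq hP; rewrite ln_qn => h.
rewrite ler_pdivrMr ?lq_gt0 //; lra.
Qed.

Lemma ent_sum (V : eqType) (f : omega S -> V) :
  entropy_q #|F| mu f = \sum_o mu o * (- ln (prob_eq mu f o) / lq).
Proof. by rewrite /entropy_q RoppE -sumrN; apply: eq_bigr => o _; rewrite mulNr mulrN. Qed.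

Lemma sum_cmp (a b : omega S -> R) : (forall o, 0 < mu o -> a o <= b o) ->
  \sum_o mu o * a o <= \sum_o mu o * b o.
Proof.
move=> h; apply: ler_sum => o _; have := mu_ge0 o; rewrite le0r => /orP[/eqP -> | hp].
  by rewrite !mul0r.
by rewrite ler_wpM2l ?mu_ge0 ?h.
Qed.

Lemma sum_mulD (a b : omega S -> R) :
  \sum_o mu o * a o + \sum_o mu o * b o = \sum_o mu o * (a o + b o).
Proof. by rewrite -big_split; apply: eq_bigr => o _; rewrite mulrDr. Qed.

Lemma sum_const_mu c : \sum_o mu o * c = c.
Proof. by rewrite -mulr_suml sum_mu1 mul1r. Qed.

Lemma eta_bound : ((ceildiv N (N - Nr + 1)).-1)%:R <= rand_size S.
Proof.
have := Hv; case=> _ [_ [_ [_ [_ Hsec]]]]; rewrite /cond_mutinf_q /= in Hsec.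
have N1 : (1 <= N)%nat by apply: leq_trans HNrN.
move: HMdef; set m := (N - Nr + 1)%nat => HM.
have m0 : (0 < m)%nat by rewrite /m addn1.
clearbody m.
set v := ceildiv N m.
have hvm : (v * m <= N + m - 1)%nat.
  by rewrite /v /ceildiv -subn1; apply: leq_trunc_div.
have Kd : (K %/ N * N)%nat = K by rewrite divnK.
have hvM : forall i, (i < v)%nat -> (i * M < K)%nat.
  move=> i hi.
  have him : (i * m < N)%nat.
    have : (i.+1 * m <= v * m)%nat by rewrite leq_mul2r hi orbT.
    rewrite mulSn => h; move: (leq_trans h hvm) m0.
    move: (i * m)%nat => a; clear; lia.
  have dpos : (0 < K %/ N)%nat by rewrite (divn_gt0 _ N1); exact: dvdn_leq HK HNK.
  rewrite HM mulnCA; move: Kd dpos; move: (K %/ N)%nat => d Kd dpos.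
  by rewrite -Kd ltn_mul2l dpos him.
have v1 : (1 <= v)%nat.
  rewrite /v /ceildiv divn_gt0 //; move: N1; clear; lia.
have [T [V [U [hT [_ [_ [_ hdec]]]]]]] := build hvM.
set HQ := entropy_q #|F| mu (fun o : omega S => o.2).
have h1 : entropy_q #|F| mu (fun w : omega S => (w.1, Xall w, sumW w.1)) <=
          HQ + entropy_q #|F| mu (fun w : omega S => (w.1, sumW w.1)).
  rewrite /HQ !ent_sum sum_mulD.
  apply: sum_cmp => o hmu; rewrite PQ PWC -mulrDl -opprD.
  rewrite ler_pM2r ?invr_gt0 ?lq_gt0 // lerN2.
  have hp : 0 < pQ S o.2 by rewrite -mu_posE.
  have hm : (0 : R) < Msz%:R^-1 by rewrite invr_gt0 ltr0n Msz_gt0.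
  rewrite -RplusE -ln_mult; try exact/RltP.
  exact: ln_le' (PWXC o).
have h2 : (L * v)%:R <= entropy_q #|F| mu (fun w : omega S => (Xall w, sumW w.1)).
  rewrite ent_sum -(sum_const_mu (L * v)%:R); apply: sum_cmp => o hmu.
  apply: pw_ge.
    apply: lt_le_trans hmu _; apply: le_trans (PWXC o) _.
    rewrite /prob_eq [X in X <= _]big_mkcond [X in _ <= X]big_mkcond.
    apply: ler_sum => o' _; case: ifP => h.
      by move: h; rewrite !xpair_eqE => /andP[/andP[_ ->] ->].
    by case: ifP => _ //; apply: mu_ge0.
  apply: le_trans (PXC o hdec) _.
  by rewrite card_mx mul1n -expnM hT natrX.
have h3 : entropy_q #|F| mu (fun o : omega S => sumW o.1) <= L%:R.
  rewrite ent_sum -(sum_const_mu L%:R); apply: sum_cmp => o hmu.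
  apply: pw_le; last by apply: le_trans (PC o); rewrite card_mx mul1n natrX.
  apply: lt_le_trans hmu _.
  rewrite /prob_eq (bigD1 o) //= lerDl; apply: sumr_ge0 => o' _; exact: mu_ge0.
rewrite /rand_size ler_pdivlMr ?ltr0n // -/HQ.
have e : v.-1%:R * L%:R = (L * v)%:R - L%:R :> R.
  by rewrite -natrM -natrB ?leq_pmulr // -subn1 mulnBl mul1n [(v * L)%nat]mulnC.
have Hs : entropy_q #|F| mu (fun w : omega S => (w.1, sumW w.1)) +
  entropy_q #|F| mu (fun w : omega S => (Xall w, sumW w.1)) -
  entropy_q #|F| mu (fun w : omega S => (w.1, Xall w, sumW w.1)) -
  entropy_q #|F| mu (fun o : omega S => sumW o.1) = 0 by exact: Hsec.
rewrite e; lra.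
Qed.

End Main.


Theorem corollary2 (K N Nr M : nat)
  (HK : leq 1 K) (HN : leq 1 N) (HNr : leq 1 Nr) (HM : leq 1 M)
  (HNrN : leq Nr N) (HNK : dvdn N K)
  (HMdef : M = muln (divn K N) (addn (subn N Nr) 1)) :
  exists q0 : nat, forall (F : finFieldType), leq q0 #|F| ->
  forall L : nat, leq 1 L ->
  forall S : scheme K N F L,
    valid_scheme Nr M S ->
    (forall S' : scheme K N F L, valid_scheme Nr M S' -> comm_cost Nr S <= comm_cost Nr S') ->
    (ceildiv N (addn (subn N Nr) 1)).-1%:R <= rand_size S.
Proof.
exists 0%nat => F _ L HL S Hv _.
exact: (eta_bound HK HL HNr HNrN Hv HNK HMdef).
Qed.
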